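(* Let $a, b, n$ be positive integers with $b>1$, $n>1$ and $\gcd(r_b(n),a)=1$. Then the numerical semigroup $S_a(b,n)$ is homogeneous.
   Context: For an integer $\ell \ge 1$, $r_b(\ell) = \sum_{j=0}^{\ell-1} b^j$, and $r_b(0)=0$. For $i \ge 1$, $a_i := r_b(n) + a\, r_b(i-1)$; $S_a(b,n)$ is the numerical semigroup generated by $\{a_i\}$, minimally generated by $a_1,\ldots,a_n$. For a numerical semigroup $S$ minimally generated by $\{g_1,\ldots,g_e\}$ and $s\in S$, the set of lengths is $\mathsf{L}_S(s) = \{\sum_j u_j : s = \sum_j u_j g_j,\ u_j \in \mathbb{N}\}$. $S$ is homogeneous if $\mathsf{L}_S(s)$ is a singleton for every $s \in \operatorname{Ap}(S) = \{\omega\in S: \omega - \operatorname{m}(S)\notin S\}$, with $\operatorname{m}(S)$ the multiplicity (smallest nonzero element). *)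

(* Defs.v *)
From mathcomp Require Import all_boot.
Set Implicit Arguments. Unset Strict Implicit. Unset Printing Implicit Defensive.

Definition rb (b l : nat) : nat := \sum_(j < l) b ^ j.

(* a_i = r_b(n) + a * r_b(i-1), i >= 1.  We index by i : 'I_n with
   Sgen a b n i = a_{i+1}, so Sgen ranges over a_1, ..., a_n. *)
Definition Sgen (a b n : nat) (i : 'I_n) : nat := rb b n + a * rb b i.

Definition in_sgrp (e : nat) (g : 'I_e -> nat) (s : nat) : Prop :=
  exists u : 'I_e -> nat, s = \sum_(j < e) u j * g j.

Definition is_multiplicity (e : nat) (g : 'I_e -> nat) (m : nat) : Prop :=
  [/\ in_sgrp g m, 0 < m & forall s, in_sgrp g s -> 0 < s -> m <= s].

(* Apery set of S with respect to m: w in S and w - m not in S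
   (w - m is an integer; it is not in S in particular when w < m). *)
Definition in_apery (e : nat) (g : 'I_e -> nat) (m w : nat) : Prop :=
  in_sgrp g w /\ ~ (exists t, in_sgrp g t /\ w = t + m).

Definition in_lengths (e : nat) (g : 'I_e -> nat) (s l : nat) : Prop :=
  exists u : 'I_e -> nat, s = \sum_(j < e) u j * g j /\ l = \sum_(j < e) u j.

Definition homogeneous (e : nat) (g : 'I_e -> nat) : Prop :=
  forall m, is_multiplicity g m ->
  forall w, in_apery g m w ->
  exists l, forall l', in_lengths g w l' <-> l' = l.

(* Main.v *)
Require Import Defs.
From mathcomp Require Import all_boot.
From mathcomp Require Import zify.

Lemma rbS b j : rb b j.+1 = 1 + b * rb b j.
Proof.
rewrite /rb big_ord_recl expn0; congr (_ + _); rewrite big_distrr.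
by apply: eq_bigr => i _; rewrite lift0 expnS.
Qed.

Lemma rb0 b : rb b 0 = 0.
Proof. by rewrite /rb big_ord0. Qed.

Lemma rb_pos b m : 0 < m -> 0 < rb b m.
Proof. by case: m => // m _; rewrite rbS. Qed.

Definition P (b m T X : nat) := exists u : 'I_m -> nat,
  \sum_(j < m) u j = T /\ \sum_(j < m) u j * rb b j = X.

Lemma decS b m (u : 'I_m.+1 -> nat) :
  \sum_(j < m.+1) u j = u ord0 + \sum_(i < m) u (lift ord0 i) /\
  \sum_(j < m.+1) u j * rb b j =
    \sum_(i < m) u (lift ord0 i) + b * \sum_(i < m) u (lift ord0 i) * rb b i.
Proof.
split; first by rewrite big_ord_recl.
rewrite big_ord_recl /= rb0 muln0 add0n big_distrr -big_split /=.
apply: eq_bigr => i _; rewrite ?lift0 rbS mulnDr muln1 mulnCA //.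
Qed.

Lemma sum_ifz b m (c : nat) : 0 < m ->
  \sum_(j < m) (if val j == 0 then c else 0) = c /\
  \sum_(j < m) (if val j == 0 then c else 0) * rb b j = 0.
Proof.
case: m => // m _.
split.
  rewrite (bigD1 ord0) //= big1 ?addn0 // => j.
  by case: j => [[|k] Hk] //=; rewrite -(inj_eq val_inj).
rewrite (bigD1 ord0) //= rb0 muln0 big1 // => j.
by case: j => [[|k] Hk] //=; rewrite -(inj_eq val_inj).
Qed.

Lemma K b m : forall T X, P b m T X -> 0 < rb b m -> rb b m <= X ->
  exists v : 'I_m -> nat, (\sum_(j < m) v j).+1 = T /\
     \sum_(j < m) v j * rb b j + rb b m = X.
Proof.
elim: m => [|m IH] T X.
  by rewrite rb0.
move=> [u [HT HX]] _ HR.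
have [H1 H2] := decS b m u.
set N := \sum_(i < m) u (lift ord0 i) in H1 H2.
set Z := \sum_(i < m) u (lift ord0 i) * rb b i in H2.
rewrite rbS in HR *.
have HP : P b m N Z by exists (fun i => u (lift ord0 i)).
case: (leqP (rb b m) Z) => HZ.
  have [m0|mpos] := posnP m.
    subst m; move: HR; rewrite -HX H2 /N /Z !big_ord0; lia.
  have [v [Hv1 Hv2]] := IH N Z HP (rb_pos b m mpos) HZ.
  pose v' := fun j : 'I_m.+1 => if unlift ord0 j is Some i then v i else u ord0.
  exists v'.
  have [E1 E2] := decS b _ v'.
  have Ev : forall i, v' (lift ord0 i) = v i by move=> i; rewrite /v' liftK.
  have E0 : v' ord0 = u ord0 by rewrite /v' unlift_none.
  rewrite E1 E2 E0; under eq_bigr do rewrite Ev.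
  under [X in b * X]eq_bigr do rewrite Ev.
  rewrite -HX -HT H2 H1 -Hv1 -Hv2 mulnDr. set s1 := \sum_(j < m) v j; set s2 := \sum_(j < m) v j * rb b j. split; lia.
have [m0|mpos] := posnP m.
  by subst m; rewrite rb0 in HZ.
set D := rb b m - Z.
have HD : Z + D = rb b m by rewrite /D; lia.
have HN : 1 + b * D <= N.
  move: HR; rewrite -HX H2 -HD mulnDr; lia.
pose c := N - 1 - b * D.
pose v' := fun j : 'I_m.+1 => if unlift ord0 j is Some i then
   (if val i == 0 then c else 0) else u ord0 + b * D.
exists v'.
have [E1 E2] := decS b _ v'.
have Ev : forall i, v' (lift ord0 i) = (if val i == 0 then c else 0)
  by move=> i; rewrite /v' liftK.
have E0 : v' ord0 = u ord0 + b * D by rewrite /v' unlift_none.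
have [F1 F2] := sum_ifz b m c mpos.
have S1 : \sum_(i < m) v' (lift ord0 i) = \sum_(i < m) (if val i == 0 then c else 0)
  by apply: eq_bigr => i _; rewrite Ev.
have S2 : \sum_(i < m) v' (lift ord0 i) * rb b i =
   \sum_(i < m) (if val i == 0 then c else 0) * rb b i
  by apply: eq_bigr => i _; rewrite Ev.
rewrite E1 E2 E0 S1 S2 F1 F2 -HX -HT H2 H1 -HD mulnDr /c; lia.
Qed.

Lemma fdec a b n (u : 'I_n -> nat) : \sum_(j < n) u j * @Sgen a b n j =
  (\sum_(j < n) u j) * rb b n + a * \sum_(j < n) u j * rb b j.
Proof.
rewrite big_distrl big_distrr -big_split /=.
by apply: eq_bigr => j _; rewrite /Sgen mulnDr mulnCA.
Qed.

Lemma uniqL R a L1 L2 X1 X2 : 0 < R -> coprime R a ->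
  L1 * R + a * X1 = L2 * R + a * X2 -> X1 <= X2 -> X2 < R -> L1 = L2.
Proof.
move=> R0 Hc E H12 H2.
have E' : a * (X2 - X1) = (L1 - L2) * R.
  rewrite mulnBr mulnBl; lia.
have Hd : R %| X2 - X1.
  by rewrite -(Gauss_dvdr _ Hc) E' dvdn_mull.
have HX : X2 - X1 = 0.
  apply/eqP; rewrite -leqn0 leqNgt; apply/negP => Hp.
  have := dvdn_leq Hp Hd; lia.
have : L1 * R = L2 * R by move: E; rewrite -(subnKC H12); lia.
by move/eqP; rewrite eqn_pmul2r // => /eqP.
Qed.

Theorem proposition17 (a b n : nat) :
  0 < a -> 1 < b -> 1 < n -> coprime (rb b n) a ->
  @homogeneous n (@Sgen a b n).
Proof.
move=> Ha Hb Hn Hcop m Hm w Hw.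
have n0 : 0 < n by lia.
have R0 : 0 < rb b n by apply: rb_pos.
have [I1 I2] := sum_ifz b n 1 n0.
have Hm' : m = rb b n.
  case: Hm => [[u Hu] m0 Hmin].
  apply/eqP; rewrite eqn_leq; apply/andP; split.
    apply: Hmin => //; exists (fun j => if val j == 0 then 1 else 0).
    by rewrite fdec I1 I2 muln0 addn0 mul1n.
  move: m0; rewrite Hu fdec.
  case: (posnP (\sum_(j < n) u j)) => HL.
    have Hz : forall j, u j = 0.
      move=> j; apply/eqP; rewrite -leqn0 -HL (bigD1 j) //= leq_addr //.
    rewrite HL mul0n big1 ?muln0 // => j _; by rewrite Hz.
  move=> _; apply: leq_trans (leq_addr _ _).
  by rewrite leq_pmull.
subst m.
case: Hw => [[u Hu] Hnot].
have HXlt : forall v : 'I_n -> nat, w = \sum_(j < n) v j * @Sgen a b n j ->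
    \sum_(j < n) v j * rb b j < rb b n.
  move=> v Hv; rewrite ltnNge; apply/negP => HRX.
  have HP : P b n (\sum_(j < n) v j) (\sum_(j < n) v j * rb b j) by exists v.
  have [v' [Hv1 Hv2]] := K b n _ _ HP R0 HRX.
  have [J1 J2] := sum_ifz b n a n0.
  apply: Hnot.
  exists (\sum_(j < n) (v' j + (if val j == 0 then a else 0)) * @Sgen a b n j).
  split; first by eexists.
  rewrite fdec big_split /= J1.
  have ->: \sum_(j < n) (v' j + (if val j == 0 then a else 0)) * rb b j =
     \sum_(j < n) v' j * rb b j + \sum_(j < n) (if val j == 0 then a else 0) * rb b j.
    by rewrite -big_split; apply: eq_bigr => j _; rewrite mulnDl.
  rewrite J2 Hv fdec -Hv1 -Hv2.
  rewrite !mulnDl !mulnDr mulSn; set s := \sum_(i < n) v' i; lia.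
exists (\sum_(j < n) u j) => l'; split.
  move=> [v [Hv ->]].
  have h1 := HXlt u Hu; have h2 := HXlt v Hv.
  have E : (\sum_(j < n) v j) * rb b n + a * \sum_(j < n) v j * rb b j =
           (\sum_(j < n) u j) * rb b n + a * \sum_(j < n) u j * rb b j.
    by rewrite -!fdec -Hu -Hv.
  case: (leqP (\sum_(j < n) v j * rb b j) (\sum_(j < n) u j * rb b j)) => H.
    exact: uniqL R0 Hcop E H h1.
  symmetry; apply: uniqL R0 Hcop (esym E) (ltnW H) h2.
by move=> ->; exists u.
Qed.
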